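(* Let $\alpha>2$, and for $s_1,s_2>0$ define \[ f(s_1,s_2)=\frac{\int_0^\infty e^{-(s_1+s_2)x^{2/\alpha}}\frac{dx}{1+x}}{s_1\int_0^\infty x^{2/\alpha}e^{-(s_1+s_2)x^{2/\alpha}}\frac{dx}{1+x}}. \] Then for each fixed $s_1>0$, the function $s_2\mapsto f(s_1,s_2)$ is monotonically increasing on $(0,\infty)$. *)

(* Defs.v *)
From Stdlib Require Import Reals.
From Coquelicot Require Import Coquelicot.
Open Scope R_scope.

(* x^(2/alpha) for x > 0, via Rpower (only evaluated on (0, oo)). *)
Definition xpow (alpha x : R) : R := Rpower x (2 / alpha).

Definition Iint (g : R -> R) : R :=
  RInt_gen g (at_right 0) (Rbar_locally p_infty).

Definition I0 (alpha s1 s2 : R) : R :=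
  Iint (fun x => exp (- (s1 + s2) * xpow alpha x) / (1 + x)).

Definition I1 (alpha s1 s2 : R) : R :=
  Iint (fun x => xpow alpha x * exp (- (s1 + s2) * xpow alpha x) / (1 + x)).

Definition fratio (alpha s1 s2 : R) : R := I0 alpha s1 s2 / (s1 * I1 alpha s1 s2).

(* Main.v *)
Require Import Defs.
From Stdlib Require Import Reals.
From Coquelicot Require Import Coquelicot.
From Stdlib Require Import Lra Classical.
Open Scope R_scope.

Lemma ballR x e y : ball x e y <-> Rabs (y - x) < e.
Proof. split; intro h; exact h. Qed.

Lemma exp_le' x y : x <= y -> exp x <= exp y.
Proof. intros [h|h]. left; apply exp_increasing; auto. subst; lra. Qed.

Lemma exint (f : R -> R) a b : 0 < a -> a <= b ->
  (forall x, 0 < x -> continuous f x) -> ex_RInt f a b.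
Proof.
  intros ha hab hc. apply (ex_RInt_continuous (V := R_CompleteNormedModule)). intros z hz.
  apply hc. rewrite Rmin_left in hz; lra.
Qed.

Lemma mono (f : R -> R) a' a b b' : 0 < a' -> a' <= a -> a <= b -> b <= b' ->
  (forall x, 0 < x -> 0 <= f x) -> (forall x, 0 < x -> continuous f x) ->
  RInt f a b <= RInt f a' b'.
Proof.
  intros h1 h2 h3 h4 hn hc.
  rewrite <- (RInt_Chasles f a' a b') by (apply exint; auto; lra).
  rewrite <- (RInt_Chasles f a b b') by (apply exint; auto; lra).
  change (plus ?x ?y) with (x + y). change (plus ?x ?y) with (x + y). idtac.
  assert (0 <= RInt f a' a). apply RInt_ge_0; auto. apply exint; auto; lra.
    intros; apply hn; lra.
  assert (0 <= RInt f b b'). apply RInt_ge_0; auto. apply exint; auto; lra.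
    intros; apply hn; lra.
  lra.
Qed.

Lemma gen_lower (f : R -> R) l :
  (forall x, 0 < x -> 0 <= f x) -> (forall x, 0 < x -> continuous f x) ->
  is_RInt_gen f (at_right 0) (Rbar_locally p_infty) l ->
  forall a b, 0 < a -> a <= b -> RInt f a b <= l.
Proof.
  intros hn hc H a b ha hab.
  destruct (Rle_or_lt (RInt f a b) l) as [h|h]; auto.
  exfalso.
  assert (he : 0 < RInt f a b - l) by lra.
  set (eps := mkposreal _ he).
  assert (H' := H (ball l eps) (locally_ball l eps)).
  destruct H' as [Q R' HQ HR HP].
  destruct HQ as [d Hd]. destruct HR as [M HM].
  set (a' := Rmin (d/2) a). set (b' := Rmax (M+1) b).
  assert (ha'1 : a' <= a) by apply Rmin_r.
  assert (ha'2 : a' <= d/2) by apply Rmin_l.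
  assert (ha'0 : 0 < a'). unfold a', Rmin. destruct Rle_dec; destruct d; simpl in *; lra.
  assert (hb1 : b <= b') by apply Rmax_r.
  assert (hb2 : M + 1 <= b') by apply Rmax_l.
  assert (hQ : Q a'). apply Hd. apply ballR. rewrite Rabs_right; destruct d; simpl in *; lra. lra.
  assert (hR : R' b') by (apply HM; lra).
  destruct (HP a' b' hQ hR) as [y [hy1 hy2]].
  simpl in hy1. apply (is_RInt_unique (V:=R_CompleteNormedModule)) in hy1.
  assert (hy3 : Rabs (y - l) < RInt f a b - l) by exact hy2.
  assert (RInt f a b <= RInt f a' b') by (apply mono; auto; lra).
  assert (y - l <= Rabs (y - l)) by apply Rle_abs.
  lra.
Qed.

Lemma gen_pos (f : R -> R) l :
  (forall x, 0 < x -> 0 <= f x) -> (forall x, 0 < x -> continuous f x) ->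
  is_RInt_gen f (at_right 0) (Rbar_locally p_infty) l ->
  (exists x0, 0 < x0 /\ 0 < f x0) -> 0 < l.
Proof.
  intros hn hc H [x0 [hx0 hf0]].
  assert (he : 0 < f x0 / 2) by lra.
  set (eps := mkposreal _ he).
  assert (Hl := hc x0 hx0 (ball (f x0) eps) (locally_ball _ eps)).
  destruct Hl as [d Hd].
  set (r := Rmin (d/2) (x0/2)).
  assert (hr1 : r <= d/2) by apply Rmin_l.
  assert (hr2 : r <= x0/2) by apply Rmin_r.
  assert (hr0 : 0 < r). unfold r, Rmin. destruct Rle_dec; destruct d; simpl in *; lra.
  assert (hpos : 0 < RInt f (x0 - r) (x0 + r)).
  { apply RInt_gt_0. lra.
    intros x hx. assert (hb := Hd x). rewrite ballR in hb.
    assert (hh : Rabs (x - x0) < d). apply Rabs_def1; destruct d; simpl in *; lra.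
    specialize (hb hh). rewrite ballR in hb. simpl in hb.
    apply Rabs_def2 in hb. lra.
    intros x hx. apply hc. lra. }
  assert (RInt f (x0 - r) (x0 + r) <= l) by (apply (gen_lower f); auto; lra).
  lra.
Qed.

Lemma gen_sup (f : R -> R) C :
  (forall x, 0 < x -> 0 <= f x) -> (forall x, 0 < x -> continuous f x) ->
  (forall a b, 0 < a -> a <= b -> RInt f a b <= C) ->
  exists S, is_RInt_gen f (at_right 0) (Rbar_locally p_infty) S.
Proof.
  intros hn hc hC.
  set (E := fun v => exists a b, 0 < a /\ a <= b /\ v = RInt f a b).
  assert (hb : bound E). exists C. intros v [a [b [h1 [h2 ->]]]]. auto.
  assert (hne : exists v, E v). exists (RInt f 1 1), 1, 1. repeat split; lra.
  destruct (completeness E hb hne) as [S [HS1 HS2]].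
  exists S. intros P [eps HP].
  destruct (classic (exists v, E v /\ S - eps < v)) as [[v [[a0 [b0 [h1 [h2 ->]]]] hv]]|hno].
  - apply Filter_prod with (Q := fun a => 0 < a <= a0) (R := fun b => b0 <= b).
    + exists (mkposreal a0 h1). intros y hy hy0. rewrite ballR in hy. simpl in hy.
      rewrite Rminus_0_r, Rabs_right in hy; lra.
    + exists b0. intros; lra.
    + intros a b [ha1 ha2] hb'. exists (RInt f a b). split.
      * apply (RInt_correct (V:=R_CompleteNormedModule)). apply exint; auto; lra.
      * apply HP. apply ballR.
        assert (RInt f a b <= S). apply HS1. exists a, b. repeat split; lra.
        assert (RInt f a0 b0 <= RInt f a b) by (apply mono; auto; lra).
        apply Rabs_def1; destruct eps; simpl in *; lra.
  - exfalso. assert (S <= S - eps). apply HS2. intros v hv.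
    destruct (Rle_or_lt v (S - eps)); auto. exfalso; apply hno; exists v; auto.
    destruct eps; simpl in *; lra.
Qed.

Lemma key_bound (p t x : R) : 0 < p < 1 -> 0 < t -> 0 < x ->
  (1 + x) * (1 + Rpower x p) * exp (- t * Rpower x p) <= 4 * exp (4 / (t * p^2)).
Proof.
  intros [hp0 hp1] ht hx.
  assert (hk : 0 < t * p ^ 2) by (apply Rmult_lt_0_compat; auto; apply pow_lt; auto).
  assert (hw : 0 < 4 / (t * p ^ 2)) by (apply Rdiv_lt_0_compat; lra).
  assert (hE : 1 <= exp (4 / (t * p ^ 2))) by (rewrite <- exp_0; apply exp_le'; lra).
  assert (hy0 : 0 < Rpower x p) by (unfold Rpower; apply exp_pos).
  assert (he0 : 0 < exp (- t * Rpower x p)) by apply exp_pos.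
  destruct (Rle_or_lt x 1) as [h1|h1].
  - assert (hy1 : Rpower x p <= 1).
    { unfold Rpower. rewrite <- exp_0. apply exp_le'.
      assert (ln x <= 0) by (rewrite <- ln_1; apply ln_le; lra). nra. }
    assert (he1 : exp (- t * Rpower x p) <= 1).
    { rewrite <- exp_0. apply exp_le'. nra. }
    assert ((1 + x) * (1 + Rpower x p) <= 4) by nra.
    assert (0 <= (1 + x) * (1 + Rpower x p)) by nra.
    nra.
  - set (u := ln x).
    assert (hu : 0 < u) by (unfold u; rewrite <- ln_1; apply ln_increasing; lra).
    assert (hxu : x = exp u) by (unfold u; rewrite exp_ln; lra).
    assert (hyu : Rpower x p = exp (p * u)) by reflexivity.
    set (y := Rpower x p) in *.
    assert (hyx : y <= x) by (rewrite hyu, hxu; apply exp_le'; nra).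
    assert (hy1 : 1 <= y) by (rewrite hyu; pose proof (exp_ineq1_le (p * u)); nra).
    assert (hysq : (p * u) ^ 2 / 4 <= y).
    { rewrite hyu. replace (p * u) with (p * u / 2 + p * u / 2) at 2 by field.
      rewrite exp_plus. pose proof (exp_ineq1_le (p * u / 2)).
      assert (0 <= p * u / 2) by nra.
      assert (0 <= exp (p * u / 2) - p * u / 2) by lra.
      assert (0 <= (exp (p * u / 2) - p * u / 2) * (exp (p * u / 2) + p * u / 2)) by
        (apply Rmult_le_pos; lra).
      nra. }
    assert (hxx : exp (u + u + - t * y) = x * x * exp (- t * y)).
    { rewrite !exp_plus, <- hxu. reflexivity. }
    assert (hexp : u + u + - t * y <= 4 / (t * p ^ 2)).
    { assert (hty : t * ((p * u) ^ 2 / 4) <= t * y) by (apply Rmult_le_compat_l; lra).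
      assert (heq : t * ((p * u) ^ 2 / 4) = (t * p ^ 2) * u ^ 2 / 4) by field.
      set (k := t * p ^ 2) in *. set (w := 4 / k) in *.
      assert (hkw : k * w = 4) by (unfold w; field; lra).
      assert (0 <= k * (u - w) ^ 2) by (apply Rmult_le_pos; [lra | apply pow2_ge_0]).
      assert (k * (u - w) ^ 2 = k * u ^ 2 - 8 * u + 4 * w) by
        (replace (8 * u) with (2 * u * (k * w)) by (rewrite hkw; ring);
         replace (4 * w) with (w * (k * w)) by (rewrite hkw; ring); ring).
      nra. }
    assert (hb : exp (u + u + - t * y) <= exp (4 / (t * p ^ 2))) by (apply exp_le'; auto).
    rewrite hxx in hb.
    assert ((1 + x) * (1 + y) <= 4 * (x * x)) by nra.
    nra.
Qed.

Lemma div_bound x e K : 0 < x -> 0 <= e -> (1 + x) * e <= K -> e / (1 + x) <= K / (1 + x) ^ 2.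
Proof.
  intros hx he hK.
  replace (e / (1 + x)) with ((1 + x) * e / ((1 + x) ^ 2)) by (field; lra).
  unfold Rdiv. apply Rmult_le_compat_r; auto.
  left; apply Rinv_0_lt_compat; nra.
Qed.

Lemma int_bound (f : R -> R) K : 0 <= K -> (forall x, 0 < x -> continuous f x) ->
  (forall x, 0 < x -> f x <= K / (1 + x) ^ 2) ->
  forall a b, 0 < a -> a <= b -> RInt f a b <= K.
Proof.
  intros hK hc hb a b ha hab.
  assert (hg : is_RInt (fun x => K / (1 + x) ^ 2) a b
                 (minus ((fun x => - K / (1 + x)) b) ((fun x => - K / (1 + x)) a))).
  { apply (is_RInt_derive (V := R_CompleteNormedModule) (fun x => - K / (1 + x))).
    - intros x hx. rewrite Rmin_left in hx by lra. rewrite Rmax_right in hx by lra.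
      auto_derive. lra. field. lra.
    - intros x hx. rewrite Rmin_left in hx by lra. rewrite Rmax_right in hx by lra.
      apply (ex_derive_continuous (K := R_AbsRing) (V := R_NormedModule)).
      auto_derive. apply Rgt_not_eq. nra. }
  assert (hle : RInt f a b <= RInt (fun x => K / (1 + x) ^ 2) a b).
  { apply RInt_le; auto. apply exint; auto. eexists; exact hg.
    intros x hx. apply hb. lra. }
  rewrite (is_RInt_unique (V := R_CompleteNormedModule) _ _ _ _ hg) in hle.
  change (minus ?x ?y) with (x - y) in hle.
  assert (0 <= K / (1 + b)) by (apply Rdiv_le_0_compat; lra).
  assert (K / (1 + a) <= K).
  { unfold Rdiv. rewrite <- (Rmult_1_r K) at 2. apply Rmult_le_compat_l; auto.
    rewrite <- Rinv_1. apply Rinv_le_contravar; lra. }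
  unfold Rdiv in *. lra.
Qed.

Lemma good (f : R -> R) K : 0 <= K ->
  (forall x, 0 < x -> 0 <= f x) -> (forall x, 0 < x -> continuous f x) ->
  (forall x, 0 < x -> f x <= K / (1 + x) ^ 2) ->
  (exists x0, 0 < x0 /\ 0 < f x0) ->
  exists S, is_RInt_gen f (at_right 0) (Rbar_locally p_infty) S /\ 0 < S.
Proof.
  intros hK hn hc hb hp.
  destruct (gen_sup f K hn hc (int_bound f K hK hc hb)) as [S HS].
  exists S. split; auto. apply (gen_pos f); auto.
Qed.

Definition g0 a t x := exp (- t * xpow a x) / (1 + x).
Definition g1 a t x := xpow a x * exp (- t * xpow a x) / (1 + x).

Lemma p_bounds a : 2 < a -> 0 < 2 / a < 1.
Proof.
  intros ha. assert (0 < 2 / a) by (apply Rdiv_lt_0_compat; lra).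
  assert (2 / a * a = 2) by (field; lra). split; nra.
Qed.

Lemma int_g (a t : R) (k : bool) : 2 < a -> 0 < t ->
  exists S, is_RInt_gen (if k then g1 a t else g0 a t) (at_right 0) (Rbar_locally p_infty) S /\ 0 < S.
Proof.
  intros ha ht. pose proof (p_bounds a ha) as hp.
  apply good with (K := 4 * exp (4 / (t * (2 / a) ^ 2))).
  - pose proof (exp_pos (4 / (t * (2 / a) ^ 2))); lra.
  - intros x hx. destruct k; unfold g0, g1, xpow; apply Rlt_le, Rdiv_lt_0_compat; try lra.
    apply Rmult_lt_0_compat; [unfold Rpower|]; apply exp_pos. apply exp_pos.
  - intros x hx. apply (ex_derive_continuous (K := R_AbsRing) (V := R_NormedModule)).
    destruct k; unfold g0, g1, xpow, Rpower; auto_derive; lra.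
  - intros x hx. pose proof (key_bound (2 / a) t x hp ht hx) as hkb.
    assert (hy : 0 < Rpower x (2 / a)) by (unfold Rpower; apply exp_pos).
    pose proof (exp_pos (- t * Rpower x (2 / a))).
    assert (hxe : 0 < (1 + x) * exp (- t * Rpower x (2 / a))) by (apply Rmult_lt_0_compat; lra).
    assert (0 < Rpower x (2 / a) * ((1 + x) * exp (- t * Rpower x (2 / a)))) by (apply Rmult_lt_0_compat; lra).
    destruct k; unfold g0, g1, xpow; apply div_bound; auto; nra.
  - exists 1. split. lra. destruct k; unfold g0, g1, xpow; apply Rdiv_lt_0_compat; try lra.
    apply Rmult_lt_0_compat; [unfold Rpower|]; apply exp_pos. apply exp_pos.
Qed.

Lemma key a t t' S0 S1 T0 T1 : 2 < a -> 0 < t -> t < t' ->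
  is_RInt_gen (g0 a t) (at_right 0) (Rbar_locally p_infty) S0 ->
  is_RInt_gen (g1 a t) (at_right 0) (Rbar_locally p_infty) S1 ->
  is_RInt_gen (g0 a t') (at_right 0) (Rbar_locally p_infty) T0 ->
  is_RInt_gen (g1 a t') (at_right 0) (Rbar_locally p_infty) T1 ->
  0 < S0 -> 0 < S1 -> S0 * T1 < T0 * S1.
Proof.
  intros ha ht htt HS0 HS1 HT0 HT1 pS0 pS1.
  set (m := S1 / S0). set (d := t' - t). set (c := exp (- d * m)).
  assert (hm : 0 < m) by (apply Rdiv_lt_0_compat; auto).
  assert (hd : 0 < d) by (unfold d; lra).
  set (Hf := fun x => m * g0 a t' x - g1 a t' x + (c * g1 a t x - c * m * g0 a t x)).
  assert (HH : is_RInt_gen Hf (at_right 0) (Rbar_locally p_infty)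
                 (m * T0 - T1 + (c * S1 - c * m * S0))).
  { exact (is_RInt_gen_plus _ _ _ _
             (is_RInt_gen_minus _ _ _ _ (is_RInt_gen_scal _ m _ HT0) HT1)
             (is_RInt_gen_minus _ _ _ _ (is_RInt_gen_scal _ c _ HS1)
                (is_RInt_gen_scal _ (c * m) _ HS0))). }
  assert (Hfe : forall x, 0 < x -> Hf x =
    (xpow a x - m) * (c - exp (- d * xpow a x)) * (exp (- t * xpow a x) / (1 + x))).
  { intros x hx. unfold Hf, g0, g1.
    replace (- t' * xpow a x) with (- d * xpow a x + - t * xpow a x) by (unfold d; ring).
    rewrite exp_plus. field. lra. }
  assert (hpos : 0 < m * T0 - T1 + (c * S1 - c * m * S0)).
  { apply (gen_pos Hf); auto.
    - intros x hx. rewrite (Hfe x hx).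
      assert (0 < exp (- t * xpow a x) / (1 + x)) by (apply Rdiv_lt_0_compat; [apply exp_pos|lra]).
      apply Rmult_le_pos; [|lra].
      destruct (Rle_or_lt m (xpow a x)).
      + assert (exp (- d * xpow a x) <= c) by (unfold c; apply exp_le'; nra).
        apply Rmult_le_pos; lra.
      + assert (c <= exp (- d * xpow a x)) by (unfold c; apply exp_le'; nra).
        replace ((xpow a x - m) * (c - exp (- d * xpow a x))) with
          ((m - xpow a x) * (exp (- d * xpow a x) - c)) by ring.
        apply Rmult_le_pos; lra.
    - intros x hx. apply (ex_derive_continuous (K := R_AbsRing) (V := R_NormedModule)).
      unfold Hf, g0, g1, xpow, Rpower; auto_derive; lra.
    - exists (Rpower (m + 1) (a / 2)). split. unfold Rpower; apply exp_pos.
      assert (hx0 : xpow a (Rpower (m + 1) (a / 2)) = m + 1).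
      { unfold xpow. rewrite Rpower_mult.
        replace (a / 2 * (2 / a)) with 1 by (field; lra). apply Rpower_1; lra. }
      rewrite Hfe by (unfold Rpower; apply exp_pos). rewrite hx0.
      assert (exp (- d * (m + 1)) < c) by (unfold c; apply exp_increasing; nra).
      assert (0 < exp (- t * (m + 1)) / (1 + Rpower (m + 1) (a / 2))).
      { apply Rdiv_lt_0_compat. apply exp_pos.
        assert (0 < Rpower (m + 1) (a / 2)) by (unfold Rpower; apply exp_pos). lra. }
      apply Rmult_lt_0_compat; [|lra]. apply Rmult_lt_0_compat; lra. }
  assert (hmS : m * S0 = S1) by (unfold m; field; lra).
  assert (T1 < m * T0) by nra.
  assert (S0 * T1 < S0 * (m * T0)) by (apply Rmult_lt_compat_l; lra).
  nra.
Qed.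

Theorem lemma3 (alpha s1 : R) (halpha : 2 < alpha) (hs1 : 0 < s1) :
  forall s2 s2' : R, 0 < s2 -> s2 < s2' -> fratio alpha s1 s2 < fratio alpha s1 s2'.
Proof.
  intros s2 s2' h2 h2'.
  destruct (int_g alpha (s1 + s2) false halpha ltac:(lra)) as [S0 [HS0 pS0]].
  destruct (int_g alpha (s1 + s2) true halpha ltac:(lra)) as [S1 [HS1 pS1]].
  destruct (int_g alpha (s1 + s2') false halpha ltac:(lra)) as [T0 [HT0 pT0]].
  destruct (int_g alpha (s1 + s2') true halpha ltac:(lra)) as [T1 [HT1 pT1]].
  simpl in *.
  assert (E0 : I0 alpha s1 s2 = S0) by exact (is_RInt_gen_unique (V := R_CompleteNormedModule) _ _ HS0).
  assert (E1 : I1 alpha s1 s2 = S1) by exact (is_RInt_gen_unique (V := R_CompleteNormedModule) _ _ HS1).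
  assert (F0 : I0 alpha s1 s2' = T0) by exact (is_RInt_gen_unique (V := R_CompleteNormedModule) _ _ HT0).
  assert (F1 : I1 alpha s1 s2' = T1) by exact (is_RInt_gen_unique (V := R_CompleteNormedModule) _ _ HT1).
  assert (hk : S0 * T1 < T0 * S1) by (apply (key alpha (s1 + s2) (s1 + s2')); auto; lra).
  unfold fratio. rewrite E0, E1, F0, F1.
  replace (S0 / (s1 * S1)) with ((S0 * T1) / (s1 * S1 * T1)) by (field; lra).
  replace (T0 / (s1 * T1)) with ((T0 * S1) / (s1 * S1 * T1)) by (field; lra).
  unfold Rdiv. apply Rmult_lt_compat_r; auto.
  apply Rinv_0_lt_compat. apply Rmult_lt_0_compat; auto. apply Rmult_lt_0_compat; auto.
Qed.
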